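(* $t(K(12,4))=2$. Moreover, if $S$ is a vertex cut of $K(12,4)$ such that $\frac{|S|}{c(K(12,4)\setminus S)} = 2$, then $S$ is the complement of a maximum independent set of $K(12,4)$.
   Context: The Kneser graph $K(n,k)$ has as vertices the $k$-element subsets of $[n]=\{1,\dots,n\}$, two vertices being adjacent iff they are disjoint. A vertex cut is a set $S$ of vertices whose removal disconnects the graph; $c(G\setminus S)$ is the number of connected components after deleting $S$; the toughness is $t(G)=\min_S |S|/c(G\setminus S)$ over vertex cuts $S$. *)

(* Defs.v *)
From mathcomp Require Import all_boot all_order all_algebra.
Set Implicit Arguments. Unset Strict Implicit. Unset Printing Implicit Defensive.
Import Order.TTheory GRing.Theory Num.Theory.

Definition kvert (n k : nat) := {A : {set 'I_n} | #|A| == k}.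

Definition kneser_adj (n k : nat) : rel (kvert n k) :=
  fun A B => [disjoint (val A) & (val B)].

Arguments kneser_adj : clear implicits.

Section Graphs.
Variables (T : finType) (e : rel T).

Definition del_rel (S : {set T}) : rel T :=
  fun x y => [&& x \in ~: S, y \in ~: S & e x y].

Definition ncomp (S : {set T}) : nat :=
  #|[set [set y in ~: S | connect (del_rel S) x y] | x in ~: S]|.

Definition vertex_cut (S : {set T}) : bool := 1 < ncomp S.

Definition is_toughness (t : rat) : Prop :=
  (forall S, vertex_cut S -> (t <= #|S|%:R / (ncomp S)%:R)%R) /\
  (exists S, vertex_cut S /\ (#|S|%:R / (ncomp S)%:R)%R = t).

Definition independent (I : {set T}) : bool :=
  [forall x in I, forall y in I, ~~ e x y].

Definition max_independent (I : {set T}) : bool :=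
  independent I && [forall J : {set T}, independent J ==> (#|J| <= #|I|)].

End Graphs.

(* Main.v *)
Require Import Defs.
From mathcomp Require Import all_boot all_order all_algebra.
From mathcomp Require Import zify.
Set Implicit Arguments. Unset Strict Implicit. Unset Printing Implicit Defensive.
Import Order.TTheory GRing.Theory Num.Theory.

Notation V := (kvert 12 4).
Notation adj := (kneser_adj 12 4).

Lemma count_sub (A : {set 'I_12}) : #|[set X : V | val X \subset A]| = 'C(#|A|, 4).
Proof.
rewrite -cards_draws -(card_imset _ val_inj); apply: eq_card => B; rewrite !inE.
apply/imsetP/andP.
- by case=> X; rewrite inE => HX ->; split => //; exact: (valP X).
- by case=> HB Hc; exists (exist _ B Hc); rewrite ?inE.
Qed.

Lemma cardV (X : V) : #|val X| = 4.
Proof. exact/eqP/(valP X). Qed.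

Lemma adj_sym : symmetric adj.
Proof. by move=> X Y; rewrite /kneser_adj disjoint_sym. Qed.

Lemma adj_irr X : adj X X = false.
Proof.
apply/negbTE; rewrite /kneser_adj -setI_eq0 setIid; apply/eqP => H.
by have := cardV X; rewrite H cards0.
Qed.

Lemma deg X : #|[set Y : V | adj X Y]| = 70.
Proof.
have -> : [set Y : V | adj X Y] = [set Y : V | val Y \subset ~: val X].
  by apply/setP => Y; rewrite !inE subsets_disjoint setCK /kneser_adj disjoint_sym.
rewrite count_sub.
have := cardsC (val X); rewrite cardV card_ord => H.
have -> : #|~: val X| = 8 by lia.
by [].
Qed.

Definition third (X Y : V) : V := odflt X [pick Z : V | val Z == ~: (val X :|: val Y)].

Lemma card_third X Y : adj X Y -> #|~: (val X :|: val Y)| == 4.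
Proof.
move=> H; have := cardsC (val X :|: val Y); rewrite card_ord cardsU !cardV.
move: H; rewrite /kneser_adj -setI_eq0 => /eqP ->; rewrite cards0; lia.
Qed.

Lemma third_val X Y : adj X Y -> val (third X Y) = ~: (val X :|: val Y).
Proof.
move=> H; rewrite /third; case: pickP => [Z /eqP // | H0].
by have := H0 (exist (fun A : {set 'I_12} => #|A| == 4) _ (card_third H)); rewrite /= eqxx.
Qed.

Lemma adj_third1 X Y : adj X Y -> adj X (third X Y).
Proof. by move=> H; rewrite /kneser_adj third_val // -subsets_disjoint subsetUl. Qed.

Lemma adj_third2 X Y : adj X Y -> adj Y (third X Y).
Proof. by move=> H; rewrite /kneser_adj third_val // -subsets_disjoint subsetUr. Qed.

Lemma third_sym X Y : adj X Y -> third X Y = third Y X.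
Proof. by move=> H; apply: val_inj; rewrite !third_val ?(adj_sym Y) // setUC. Qed.

Lemma third_inv X Y : adj X Y -> third X (third X Y) = Y.
Proof.
move=> H; apply: val_inj; rewrite third_val ?adj_third1 // third_val //.
move: H; rewrite /kneser_adj => H.
apply/setP => i; rewrite !inE; case Hi: (i \in val Y); rewrite ?orbT ?orbF /=.
  by rewrite (disjointFl H Hi).
by case: (i \in sval X).
Qed.

Section Main.
Variable S : {set V}.
Local Notation W := (~: S).

Definition NS X := #|[set s | (s \in S) && adj X s]|.
Definition TS X := #|[set s | (s \in S) && adj X s && (third X s \in S)]|.
Definition MS X := #|[set s | (s \in S) && adj X s && (third X s \notin S)]|.
Definition phi X := NS X + TS X.
Definition U s := #|[set X | (X \in W) && adj X s]| +
                  #|[set X | (X \in W) && adj X s && (third X s \in S)]|.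

Lemma NS_split X : NS X = TS X + MS X.
Proof.
rewrite /NS /TS /MS -(cardsID [set s | third X s \in S] [set s | (s \in S) && adj X s]).
by congr addn; apply: eq_card => s; rewrite !inE; case: (s \in S); case: (adj X s); case: (third X s \in S).
Qed.

Lemma U_le s : U s <= 70.
Proof.
rewrite /U -(deg s).
rewrite -(cardsID S [set Y | adj s Y]) [X in _ <= X]addnC.
apply: leq_add.
  apply: subset_leq_card; apply/subsetP => Y; rewrite !inE.
  by case/andP => H1 H2; rewrite H1 /= adj_sym.
rewrite -(@card_in_imset _ _ (third s) [set X | (X \in W) && adj X s && (third X s \in S)]).
  apply: subset_leq_card; apply/subsetP => Y /imsetP[X]; rewrite !inE => /andP[/andP[_ H1] H2] ->.
  by rewrite -third_sym ?H2 // adj_third2.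
move=> X1 X2; rewrite !inE => /andP[/andP[_ H1] _] /andP[/andP[_ H2] _] E.
by rewrite -(third_inv (X := s) (Y := X1)) 1?adj_sym // E third_inv // adj_sym.
Qed.

Lemma double_count (Q : V -> V -> bool) :
  \sum_(X in W) #|[set s | (s \in S) && Q X s]| =
  \sum_(s in S) #|[set X | (X \in W) && Q X s]|.
Proof.
under eq_bigr do rewrite -sum1dep_card.
rewrite (exchange_big_dep (fun s => s \in S)) /=; last by move=> i j _ /andP[].
apply: eq_bigr => s Hs; rewrite -sum1dep_card; apply: eq_bigl => X.
by rewrite Hs.
Qed.

Lemma sum_phi : \sum_(X in W) phi X = \sum_(s in S) U s.
Proof.
have E : forall X, TS X = #|[set s | (s \in S) && (adj X s && (third X s \in S))]|.
  by move=> X; apply: eq_card => s; rewrite !inE andbA.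
rewrite /phi /U big_split /= big_split /=.
rewrite (eq_bigr _ (fun X _ => E X)).
rewrite (double_count (fun X s => adj X s)).
rewrite (double_count (fun X s => adj X s && (third X s \in S))); congr (_ + _).
by apply: eq_bigr => s _; apply: eq_card => X; rewrite !inE ?andbA.
Qed.

Section Block.
Variable K : {set V}.
Hypothesis KW : K \subset W.
Hypothesis Kcl : forall X Y, X \in K -> Y \in W -> adj X Y -> Y \in K.

Definition dK X := #|[set Y in K | adj X Y]|.

Lemma NS_dK X : X \in K -> NS X + dK X = 70.
Proof.
move=> HX; rewrite -(deg X) -(cardsID S [set Y | adj X Y]); congr addn;
  apply: eq_card => Y; rewrite !inE; first by rewrite andbC.
case H: (adj X Y); rewrite ?andbT ?andbF //.
apply/idP/idP => [HY | HY].
  by have := subsetP KW Y HY; rewrite inE.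
by apply: (Kcl HX); rewrite ?inE.
Qed.

Lemma MS_dK X : X \in K -> MS X <= dK X.
Proof.
move=> HX; rewrite /MS -(@card_in_imset _ _ (third X)).
  apply: subset_leq_card; apply/subsetP => Y /imsetP[s]; rewrite !inE => /andP[/andP[_ H1] H2] ->.
  by rewrite adj_third1 // andbT; apply: (Kcl HX) => //; rewrite ?inE // adj_third1.
move=> s1 s2; rewrite !inE => /andP[/andP[_ H1] _] /andP[/andP[_ H2] _] E.
by rewrite -(third_inv H1) E third_inv.
Qed.

Lemma phi_lb X : X \in K -> 140 <= phi X + 3 * dK X.
Proof.
move=> HX; have := NS_dK HX; have := MS_dK HX; have := NS_split X; rewrite /phi; lia.
Qed.

Lemma dK_le X : X \in K -> dK X <= #|K| - 1.
Proof.
move=> HX; rewrite (cardsD1 X K) HX add1n subn1 /=.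
apply: subset_leq_card; apply/subsetP => Y; rewrite !inE => /andP[HY H].
rewrite HY andbT; apply/eqP => E; by rewrite E adj_irr in H.
Qed.

Lemma NS_ge5 X z : X \in K -> z \in W -> z \notin K -> 5 <= NS X.
Proof.
move=> HX Hz HzK.
have nadj : ~~ adj X z by apply/negP => H; move: HzK; rewrite (Kcl HX Hz H).
have c5 : 5 <= #|~: (val X :|: val z)|.
  have := cardsC (val X :|: val z); rewrite card_ord cardsU !cardV.
  have : 0 < #|val X :&: val z|.
    by rewrite card_gt0 setI_eq0.
  lia.
apply: leq_trans (leq_bin2l 4 c5) _; rewrite -count_sub.
apply: subset_leq_card; apply/subsetP => s; rewrite !inE => Hs.
have H1 : adj X s.
  have : val s \subset ~: val X by rewrite (subset_trans Hs) // setCS subsetUl.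
  by rewrite subsets_disjoint setCK /kneser_adj disjoint_sym.
have H2 : adj z s.
  have : val s \subset ~: val z by rewrite (subset_trans Hs) // setCS subsetUr.
  by rewrite subsets_disjoint setCK /kneser_adj disjoint_sym.
rewrite H1 andbT; apply/negPn/negP => Hs'.
have HsK : s \in K by apply: (Kcl HX) => //; rewrite inE.
by move: HzK; rewrite (Kcl HsK Hz) // adj_sym.
Qed.

Lemma block_lb z : z \in W -> z \notin K -> 0 < #|K| ->
  140 + (1 < #|K|) <= \sum_(X in K) phi X.
Proof.
move=> Hz HzK k0.
have A1 : #|K| * 140 <= \sum_(X in K) phi X + \sum_(X in K) 3 * dK X.
  rewrite -big_split /= -sum_nat_const; apply: leq_sum => X HX; exact: phi_lb.
have A2 : \sum_(X in K) 3 * dK X <= #|K| * (3 * (#|K| - 1)).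
  rewrite -sum_nat_const; apply: leq_sum => X HX; rewrite leq_mul2l dK_le //; lia.
have A3 : #|K| * 5 <= \sum_(X in K) phi X.
  rewrite -sum_nat_const; apply: leq_sum => X HX; exact: leq_trans (NS_ge5 HX Hz HzK) (leq_addr _ _).
move: A1 A2 A3; set A := \sum_(X in K) phi X; set C := \sum_(X in K) 3 * dK X.
set k := #|K|.
case: (ltnP 1 k) => Hk /=; last first.
  have -> : k = 1 by lia.
  lia.
case: (ltnP k 47) => Hk2.
  have : 1 * 2 <= (k - 1) * (140 - 3 * k) by apply: leq_mul; lia.
  nia.
lia.
Qed.

End Block.

Definition rr := del_rel adj S.
Definition comp x := [set y in W | connect rr x y].
Definition PP := [set comp x | x in W].

Lemma ncompE : ncomp adj S = #|PP|.
Proof. by []. Qed.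

Lemma rr_sym : symmetric rr.
Proof. by move=> x y; rewrite /rr /del_rel adj_sym andbCA. Qed.

Lemma eqiR : {in W & &, equivalence_rel (connect rr)}.
Proof.
move=> x y z _ _ _; split; first exact: connect0.
move=> Hxy; apply/idP/idP => H.
  by apply: connect_trans H; rewrite (sym_connect_sym rr_sym).
exact: connect_trans Hxy H.
Qed.

Lemma partP : partition PP W.
Proof. exact: (equivalence_partitionP eqiR). Qed.

Lemma comp_sub x : comp x \subset W.
Proof. by apply/subsetP => y; rewrite inE => /andP[]. Qed.

Lemma comp_cl x X Y : X \in comp x -> Y \in W -> adj X Y -> Y \in comp x.
Proof.
rewrite !inE => /andP[HX Hc] HY H; rewrite HY /=.
apply: connect_trans Hc (connect1 _); by rewrite /rr /del_rel !inE HX HY.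
Qed.

Lemma comp_self x : x \in W -> x \in comp x.
Proof. by move=> Hx; rewrite inE Hx connect0. Qed.

Lemma main_sum : 1 < #|PP| -> \sum_(K in PP) (140 + (1 < #|K|)) <= 70 * #|S|.
Proof.
move=> H1.
have [_ tiP _] := and3P partP.
apply: (@leq_trans (\sum_(K in PP) \sum_(X in K) phi X)).
  apply: leq_sum => K HK.
  have [K1 [K2 [HK1 HK2 HK12]]] := card_gt1P H1.
  have [K' [HK' HK'K]] : exists K', K' \in PP /\ K' != K.
    case: (eqVneq K1 K) => E; last by exists K1.
    by exists K2; split => //; rewrite -E eq_sym.
  have /trivIsetP tiP' := tiP; have dis := tiP' K' K HK' HK HK'K.
  case/imsetP: HK => x Hx EK; case/imsetP: HK' => x' Hx' EK'.
  have Hz : x' \notin K.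
    apply/negP => Hin.
    move: dis; rewrite -setI_eq0 => /eqP/setP/(_ x').
    by rewrite !inE Hin andbT EK' comp_self.
  rewrite EK; apply: (@block_lb (comp x) (comp_sub x) (@comp_cl x) x') => //.
    by rewrite -EK.
  by apply/card_gt0P; exists x; exact: comp_self.
rewrite -(set_partition_big _ partP) sum_phi.
rewrite mulnC -sum_nat_const; apply: leq_sum => s _; exact: U_le.
Qed.

Lemma cut_bound : vertex_cut adj S -> 2 * ncomp adj S <= #|S|.
Proof.
rewrite /vertex_cut ncompE => H; have := main_sum H.
rewrite big_split /= sum_nat_const => H2.
have : #|PP| * 140 <= 70 * #|S| by apply: leq_trans H2; apply: leq_addr.
move=> H3; clear H2; rewrite mulnC in H3; move: H3; set p := #|PP|; set q := #|S|; move=> H3; lia.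
Qed.

Lemma cut_eq : vertex_cut adj S -> #|S| = 2 * ncomp adj S ->
  forall K, K \in PP -> #|K| <= 1.
Proof.
rewrite /vertex_cut ncompE => H E K HK; have := main_sum H.
rewrite big_split /= sum_nat_const (bigD1 K) //= E.
case: (ltnP 1 #|K|) => //= _; lia.
Qed.

Lemma singletons_indep : (forall K, K \in PP -> #|K| <= 1) ->
  independent adj W /\ #|PP| = #|W|.
Proof.
move=> H; split.
  apply/forallP => X; apply/implyP => HX; apply/forallP => Y; apply/implyP => HY.
  apply/negP => A.
  have HYc := comp_cl (comp_self HX) HY A.
  have := H _ (imset_f comp HX); move/card_le1P => /(_ X (comp_self HX) Y).
  rewrite HYc => /esym/eqP E.
  by move: A; rewrite E adj_irr.
have [/eqP cov tiP nz] := and3P partP.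
rewrite (card_partition partP) -sum1_card; apply: eq_bigr => K HK.
apply/eqP; rewrite eqn_leq H //= card_gt0.
rewrite andbT; apply/negP => /eqP E; by move: nz; rewrite -E HK.
Qed.

Lemma indep_ncomp : independent adj W -> ncomp adj S = #|W|.
Proof.
move=> HI; rewrite ncompE.
have E : forall x, x \in W -> comp x = [set x].
  move=> x Hx; apply/setP => y; rewrite !inE; apply/andP/eqP => [[Hy] | ->].
    case/connectP => p; case: p => [_ -> // | a p] /= /andP[Ha _] _.
    move: Ha; rewrite /rr /del_rel => /and3P[Hx' Ha' Hadj].
    by move: HI => /forallP/(_ x)/implyP/(_ Hx')/forallP/(_ a)/implyP/(_ Ha'); rewrite Hadj.
  by split; [rewrite -in_setC | exact: connect0].
rewrite /PP (eq_in_imset E) card_imset //; exact: set1_inj.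
Qed.

End Main.

Definition J0 : {set V} := [set X : V | ord0 \in val X].

Lemma cardVT : #|[set: V]| = 495.
Proof.
have -> : [set: V] = [set X : V | val X \subset setT] by apply/setP => X; rewrite !inE subsetT.
by rewrite count_sub cardsT card_ord.
Qed.

Lemma cardCJ0 : #|~: J0| = 330.
Proof.
have -> : ~: J0 = [set X : V | val X \subset ~: [set ord0]].
  by apply/setP => X; rewrite !inE subsets_disjoint setCK disjoint_sym disjoints1.
rewrite count_sub; have := cardsC [set (ord0 : 'I_12)]; rewrite cards1 card_ord => H.
by have -> : #|~: [set (ord0 : 'I_12)]| = 11 by lia.
Qed.

Lemma cardJ0 : #|J0| = 165.
Proof. have := cardsC J0; rewrite -cardsT cardVT cardCJ0; lia. Qed.

Lemma J0_indep : independent adj (~: ~: J0).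
Proof.
rewrite setCK; apply/forallP => X; apply/implyP; rewrite inE => HX.
apply/forallP => Y; apply/implyP; rewrite inE => HY.
by rewrite /kneser_adj; apply/negP => /disjointFr/(_ HX); rewrite HY.
Qed.

Theorem theorem5p2 :
  is_toughness (kneser_adj 12 4) 2%:R /\
  (forall S : {set kvert 12 4},
     vertex_cut (kneser_adj 12 4) S ->
     (#|S|%:R / (ncomp (kneser_adj 12 4) S)%:R = 2%:R :> rat)%R ->
     exists I : {set kvert 12 4},
       max_independent (kneser_adj 12 4) I /\ S = ~: I).
Proof.
split; [split|].
- move=> S HS; have H := cut_bound HS.
  have c0 : (0 < (ncomp adj S)%:R :> rat)%R.
    by rewrite ltr0n; move: HS; rewrite /vertex_cut; lia.
  by rewrite ler_pdivlMr // -natrM ler_nat.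
- exists (~: J0).
  have E := indep_ncomp J0_indep; rewrite setCK cardJ0 in E.
  split; first by rewrite /vertex_cut E.
  rewrite E cardCJ0 (_ : 330 = 2 * 165)%N // natrM mulfK //.
- move=> S HS Hr.
  have c0 : ((ncomp adj S)%:R != 0 :> rat)%R.
    by rewrite pnatr_eq0; move: HS; rewrite /vertex_cut; lia.
  have Hn : #|S| = 2 * ncomp adj S.
    apply/eqP; rewrite -(eqr_nat rat) natrM -Hr mulfVK //.
  have [Hind Hc] := singletons_indep (cut_eq HS Hn).
  exists (~: S); split; last by rewrite setCK.
  rewrite /max_independent Hind /=; apply/forallP => J; apply/implyP => HJ.
  rewrite -ncompE in Hc.
  case: (ltnP 1 #|J|) => HJ1; last first.
    by rewrite -Hc; apply: leq_trans HJ1 (ltnW HS).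
  have HJ' : independent adj (~: ~: J) by rewrite setCK.
  have E := indep_ncomp HJ'; rewrite setCK in E.
  have HcutJ : vertex_cut adj (~: J) by rewrite /vertex_cut E.
  have := cut_bound HcutJ; rewrite E.
  have := cardsC J; rewrite -cardsT cardVT => H1; have := cardsC S; rewrite -cardsT cardVT => H2 H3. rewrite Hc in Hn. move: H1 H2 H3 Hn. set a := #|J|. set b := #|~: J|. set c := #|S|. set d := #|~: S|. clearbody a b c d. lia.
Qed.
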